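(* Let $\mathbb{K}$ be an algebraically closed field with $\operatorname{char}(\mathbb{K})\neq 2$. Let \[ A=\frac{\mathbb{K}\langle x_1,x_2,x_3,x_4\rangle}{\langle g_1,\ldots,g_6\rangle}, \] where \[ g_1=x_1x_2-x_2x_1,\quad g_2=x_2x_3-x_3x_2,\quad g_3=x_1x_3-x_3x_1, \] \[ g_4=x_1x_4-x_4x_1-x_1^2+x_2x_3,\quad g_5=x_2x_4-x_4x_2,\quad g_6=x_3x_4-x_4x_3. \] Then the point scheme of $A$ is $Q\cup L\subset\mathbb{P}^3$, where $Q=\mathcal{V}(x_1^2-x_2x_3)$ and $L=\mathcal{V}(x_2,x_3)$; in particular the line $L$ is tangent to the quadric $Q$ at a singular point of $Q$.
   Context: Point scheme: for a quadratic algebra $A=\mathbb{K}\langle x_1,\dots,x_4\rangle/\langle g_1,\dots,g_6\rangle$ with each $g_i=\sum_{j,k}c_{ijk}x_jx_k$ homogeneous of degree 2, let $D$ be the $6\times 4$ matrix with entries $D_{ik}=\sum_j c_{ijk}x_j$ (linear forms in $x_1,\dots,x_4$), so that $g_i(\alpha,\beta):=\sum_{j,k}c_{ijk}\alpha_j\beta_k=(D(\alpha)\beta)_i$ for $(\alpha,\beta)\in\mathbb{P}^3\times\mathbb{P}^3$. The point scheme of $A$ is the subscheme of $\mathbb{P}^3$ (homogeneous coordinates $x_1,\dots,x_4$) defined by the vanishing of all $4\times 4$ minors of $D$; its points are the $\alpha\in\mathbb{P}^3$ for which there exists $\beta\in\mathbb{P}^3$ with $g_i(\alpha,\beta)=0$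 for all $i$. For homogeneous polynomials $f_1,\dots,f_r$, $\mathcal{V}(f_1,\dots,f_r)$ denotes their zero locus (subscheme) in $\mathbb{P}^3$. *)

(* Defs.v *)
From HB Require Import structures.
From mathcomp Require Import all_boot all_order all_algebra.
From mathcomp Require Import mpoly.
Set Implicit Arguments.
Unset Strict Implicit.
Unset Printing Implicit Defensive.
Import Order.TTheory GRing.Theory.
Local Open Scope ring_scope.

(* Variables x_1,..,x_4 of the paper are 'X_0,..,'X_3 (0-based). *)
Definition xv (K : fieldType) (j : nat) : {mpoly K[4]} := 'X_(inord j).

(* Coefficient tensor c_{ijk} (0-based indices) of the relations
   g_i = sum_{j,k} c_{ijk} x_j x_k of the algebra A:
   g1 = x1x2 - x2x1, g2 = x2x3 - x3x2, g3 = x1x3 - x3x1,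
   g4 = x1x4 - x4x1 - x1^2 + x2x3, g5 = x2x4 - x4x2, g6 = x3x4 - x4x3. *)
Definition cA (K : fieldType) (i : 'I_6) (j k : 'I_4) : K :=
  match nat_of_ord i, nat_of_ord j, nat_of_ord k with
  | 0, 0, 1 => 1 | 0, 1, 0 => -1
  | 1, 1, 2 => 1 | 1, 2, 1 => -1
  | 2, 0, 2 => 1 | 2, 2, 0 => -1
  | 3, 0, 3 => 1 | 3, 3, 0 => -1 | 3, 0, 0 => -1 | 3, 1, 2 => 1
  | 4, 1, 3 => 1 | 4, 3, 1 => -1
  | 5, 2, 3 => 1 | 5, 3, 2 => -1
  | _, _, _ => 0
  end.

Definition Dmat (K : fieldType) (c : 'I_6 -> 'I_4 -> 'I_4 -> K)
  : 'M[{mpoly K[4]}]_(6, 4) :=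
  \matrix_(i < 6, k < 4) \sum_(j < 4) c i j k *: 'X_j.

Definition gen_ideal (R : comRingType) (G : R -> Prop) (p : R) : Prop :=
  exists (s a : seq R), (forall q, q \in s -> G q) /\ size a = size s /\
    p = \sum_(i < size s) a`_i * s`_i.

Definition minors4 (K : fieldType) (D : 'M[{mpoly K[4]}]_(6, 4))
  (q : {mpoly K[4]}) : Prop :=
  exists f : 'I_4 -> 'I_6, injective f /\ q = \det (rowsub f D).

(* Saturation (I : m^oo) w.r.t. the irrelevant ideal m = (x_1,..,x_4):
   p is in it iff m^N p is contained in I for some N. Two homogeneous ideals
   define the same closed subscheme of P^3 iff their saturations agree. *)
Definition saturation (K : fieldType) (I : {mpoly K[4]} -> Prop)
  (p : {mpoly K[4]}) : Prop :=
  exists N : nat, forall m : 'X_{1..4}, mdeg m = N -> I ('X_[m] * p).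

Definition point_scheme_ideal (K : fieldType)
  (c : 'I_6 -> 'I_4 -> 'I_4 -> K) : {mpoly K[4]} -> Prop :=
  gen_ideal (minors4 (Dmat c)).

Definition fQ (K : fieldType) : {mpoly K[4]} := xv K 0 ^+ 2 - xv K 1 * xv K 2.
Definition ideal_Q (K : fieldType) : {mpoly K[4]} -> Prop :=
  gen_ideal (fun q => q = fQ K).
Definition ideal_L (K : fieldType) : {mpoly K[4]} -> Prop :=
  gen_ideal (fun q => q = xv K 1 \/ q = xv K 2).
Definition ideal_QuL (K : fieldType) (p : {mpoly K[4]}) : Prop :=
  ideal_Q p /\ ideal_L p.

Definition ptL (K : fieldType) (s t : K) : 'I_4 -> K :=
  fun i => if nat_of_ord i == 0%N then s else if nat_of_ord i == 3%N then t else 0.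

(* Main.v *)
Require Import Defs.
From HB Require Import structures.
From mathcomp Require Import all_boot all_order all_algebra.
From mathcomp Require Import mpoly.
From mathcomp Require Import ring.
Import GRing.Theory.
Local Open Scope ring_scope.

Section Ideal.
Variable R : comNzRingType.
Variable G : R -> Prop.

Lemma gen_ind (J : R -> Prop) :
  J 0 -> (forall x y, J x -> J y -> J (x + y)) ->
  (forall r g, G g -> J (r * g)) -> forall p, gen_ideal G p -> J p.
Proof.
move=> J0 JD JM p [s [a [Hs [Ha ->]]]].
elim: s a Hs Ha => [|g s IH] [|b a] //= Hs Ha.
  by rewrite big_ord0.
rewrite big_ord_recl /=; apply: JD.
  by apply: JM; apply: Hs; rewrite inE eqxx.
apply: IH; last by case: Ha.
by move=> q qs; apply: Hs; rewrite inE qs orbT.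
Qed.

Lemma gen0 : gen_ideal G 0.
Proof. by exists [::], [::]; rewrite big_ord0. Qed.

Lemma genG g : G g -> gen_ideal G g.
Proof.
move=> Gg; exists [:: g], [:: 1]; split; first by move=> q; rewrite inE => /eqP ->.
by split=> //; rewrite big_ord1 mul1r.
Qed.

Lemma genM r p : gen_ideal G p -> gen_ideal G (r * p).
Proof.
move=> [s [a [Hs [Ha ->]]]]; exists s, (map (fun x => r * x) a).
split=> //; rewrite size_map; split=> //.
rewrite mulr_sumr; apply: eq_bigr => i _.
by rewrite (nth_map 0) ?Ha // mulrA.
Qed.

Lemma genD p q : gen_ideal G p -> gen_ideal G q -> gen_ideal G (p + q).
Proof.
move=> [s [a [Hs [Ha ->]]]] [s' [a' [Hs' [Ha' ->]]]].
exists (s ++ s'), (a ++ a'); split.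
  by move=> x; rewrite mem_cat => /orP [/Hs|/Hs'].
rewrite !size_cat Ha Ha'; split=> //.
rewrite big_split_ord /=; congr (_ + _); apply: eq_bigr => i _.
  by rewrite !nth_cat Ha ltn_ord.
by rewrite !nth_cat Ha ltnNge leq_addr /= addKn.
Qed.

End Ideal.

Lemma det4 (R : comNzRingType) (M : 'M[R]_4) (m : nat -> nat -> R) :
  (forall a b, (a < 4)%N -> (b < 4)%N -> M (inord a) (inord b) = m a b) ->
  \det M = m 0 0* m 1 1* m 2 2* m 3 3 - m 0 0* m 1 1* m 2 3* m 3 2 - m 0 0* m 1 2* m 2 1* m 3 3 + m 0 0* m 1 2* m 2 3* m 3 1 + m 0 0* m 1 3* m 2 1* m 3 2 - m 0 0* m 1 3* m 2 2* m 3 1 - m 0 1* m 1 0* m 2 2* m 3 3 + m 0 1* m 1 0* m 2 3* m 3 2 + m 0 1* m 1 2* m 2 0* m 3 3 - m 0 1* m 1 2* m 2 3* m 3 0 - m 0 1* m 1 3* m 2 0* m 3 2 + m 0 1* m 1 3* m 2 2* m 3 0 + m 0 2* m 1 0* m 2 1* m 3 3 - m 0 2* m 1 0* m 2 3* m 3 1 - m 0 2* m 1 1* m 2 0* m 3 3 + m 0 2* m 1 1* m 2 3* m 3 0 + m 0 2* m 1 3* m 2 0* m 3 1 - m 0 2* m 1 3* m 2 1* m 3 0 - m 0 3* m 1 0* m 2 1* m 3 2 + m 0 3* m 1 0* m 2 2* m 3 1 + m 0 3* m 1 1* m 2 0* m 3 2 - m 0 3* m 1 1* m 2 2* m 3 0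 - m 0 3* m 1 2* m 2 0* m 3 1 + m 0 3* m 1 2* m 2 1* m 3 0.
Proof.
move=> H.
have Mm : forall i j : 'I_4, M i j = m i j.
  by move=> i j; rewrite -H ?ltn_ord // !inord_val.
rewrite (expand_det_row _ (ord0 : 'I_4)) /cofactor !big_ord_recr !big_ord0 /=.
rewrite !(expand_det_row _ (ord0 : 'I_3)) /cofactor !big_ord_recr !big_ord0 /=.
rewrite !(expand_det_row _ (ord0 : 'I_2)) /cofactor !big_ord_recr !big_ord0 /=.
rewrite !(expand_det_row _ (ord0 : 'I_1)) /cofactor !big_ord_recr !big_ord0 /=.
rewrite !det_mx00 !mxE !Mm /=.
ring.
Qed.

Section S.
Variable K : fieldType.
Local Notation x j := (xv K j).

Definition Dn (a b : nat) : {mpoly K[4]} :=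
  match a, b with
  | 0, 0 => - x 1 | 0, 1 => x 0
  | 1, 1 => - x 2 | 1, 2 => x 1
  | 2, 0 => - x 2 | 2, 2 => x 0
  | 3, 0 => - x 0 - x 3 | 3, 2 => x 1 | 3, 3 => x 0
  | 4, 1 => - x 3 | 4, 3 => x 1
  | 5, 2 => - x 3 | 5, 3 => x 2
  | _, _ => 0
  end.

Lemma XE (i : 'I_4) : 'X_i = x i.
Proof. by rewrite /xv inord_val. Qed.

Lemma Dnat (i : 'I_6) (k : 'I_4) : Dmat (@cA K) i k = Dn i k.
Proof.
rewrite /Dmat mxE !big_ord_recr big_ord0 /= !XE /=.
case: i => [[|[|[|[|[|[|i]]]]]] Hi] //; case: k => [[|[|[|[|k]]]] Hk] //=;
  rewrite /cA /= ?scale0r ?scale1r ?scaleN1r; try ring.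
Qed.


Definition Lp (p : {mpoly K[4]}) := exists a b, p = a * x 1 + b * x 2.
Definition Qp (p : {mpoly K[4]}) := exists a, p = a * fQ K.

Lemma Lp0 : Lp 0. Proof. by exists 0, 0; rewrite !mul0r addr0. Qed.
Lemma LpD p q : Lp p -> Lp q -> Lp (p + q).
Proof. by move=> [a [b ->]] [c [d ->]]; exists (a + c), (b + d); ring. Qed.
Lemma LpM r p : Lp p -> Lp (r * p).
Proof. by move=> [a [b ->]]; exists (r * a), (r * b); ring. Qed.
Lemma QpD p q : Qp p -> Qp q -> Qp (p + q).
Proof. by move=> [a ->] [c ->]; exists (a + c); ring. Qed.
Lemma QpM r p : Qp p -> Qp (r * p).
Proof. by move=> [a ->]; exists (r * a); ring. Qed.

Lemma Lchar p : ideal_L p <-> Lp p.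
Proof.
split.
  apply: gen_ind; [exact: Lp0| exact: LpD|].
  move=> r g [->|->]; [exists r, 0 | exists 0, r]; ring.
move=> [a [b ->]]; apply: genD; apply: genM; apply: genG; tauto.
Qed.

Lemma Qchar p : ideal_Q p <-> Qp p.
Proof.
split.
  apply: gen_ind; [by exists 0; rewrite mul0r | exact: QpD|].
  by move=> r g ->; exists r.
by move=> [a ->]; apply: genM; apply: genG.
Qed.

Definition lqe : 4.-tuple {mpoly K[4]} := [tuple x 0; 0; 0; x 3].
Definition ev (p : {mpoly K[4]}) := comp_mpoly lqe p.

Lemma evx0 : ev (x 0) = x 0. Proof. by rewrite /ev /xv comp_mpolyXU inordK. Qed.
Lemma evx1 : ev (x 1) = 0. Proof. by rewrite /ev /xv comp_mpolyXU inordK. Qed.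
Lemma evx2 : ev (x 2) = 0. Proof. by rewrite /ev /xv comp_mpolyXU inordK. Qed.
Lemma evx3 : ev (x 3) = x 3. Proof. by rewrite /ev /xv comp_mpolyXU inordK. Qed.

Lemma evD p q : ev (p + q) = ev p + ev q. Proof. exact: rmorphD. Qed.
Lemma evM p q : ev (p * q) = ev p * ev q. Proof. exact: rmorphM. Qed.
Lemma evN p : ev (- p) = - ev p. Proof. exact: rmorphN. Qed.

Lemma ev0 : ev 0 = 0. Proof. exact: rmorph0. Qed.

Lemma Lp_ev p : Lp p -> ev p = 0.
Proof. by move=> [a [b ->]]; rewrite evD !evM evx1 evx2 !mulr0 addr0. Qed.

Lemma mono_aux (a b c d : nat) :
  Lp (x 0 ^+ a * x 1 ^+ b * x 2 ^+ c * x 3 ^+ d - x 0 ^+ a * 0 ^+ b * 0 ^+ c * x 3 ^+ d).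
Proof.
have z : forall n, (0 : {mpoly K[4]}) ^+ n.+1 = 0 by move=> n; rewrite exprS mul0r.
case: b => [|b].
  case: c => [|c].
    by rewrite !expr0 !mulr1 subrr; exact: Lp0.
  rewrite z; exists 0, (x 0 ^+ a * x 2 ^+ c * x 3 ^+ d); rewrite exprS; ring.
rewrite z; exists (x 0 ^+ a * x 1 ^+ b * x 2 ^+ c * x 3 ^+ d), 0; rewrite exprS; ring.
Qed.

Lemma Lp_sub p : Lp (p - ev p).
Proof.
have -> : p - ev p = \sum_(m <- msupp p) p@_m *: ('X_[m] - ev 'X_[m]).
  have E : ev p = \sum_(m <- msupp p) p@_m *: ev 'X_[m].
    rewrite {1}[p]mpolyE /ev (big_morph _ (comp_mpolyD lqe) (comp_mpoly0 lqe)).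
    by apply: eq_bigr => m _; rewrite comp_mpolyZ.
  rewrite E {1}[p]mpolyE -sumrB; apply: eq_bigr => m _; by rewrite scalerBr.
apply: (big_ind Lp); [exact: Lp0 | exact: LpD |].
move=> m _; rewrite -mul_mpolyC; apply: LpM.
have T : forall i : 'I_4, tnth lqe i = nth 0 [:: x 0; 0; 0; x 3] i.
  by move=> i; rewrite (tnth_nth 0).
rewrite /ev comp_mpolyX [X in X - _]mpolyXE_id !big_ord_recr !big_ord0 /= !XE !T /=.
rewrite !mul1r; exact: mono_aux.
Qed.

Lemma ev_Lp p : ev p = 0 -> Lp p.
Proof. by move=> e; have := Lp_sub p; rewrite e subr0. Qed.

Lemma x0_neq0 : x 0 != 0.
Proof.
apply/negP => /eqP h.
have := congr1 (meval (fun _ => (1 : K))) h.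
by rewrite /xv mevalXU rmorph0 => /eqP; rewrite oner_eq0.
Qed.

Lemma evf : ev (fQ K) = x 0 ^+ 2.
Proof. by rewrite /fQ evD evN evM evx1 mul0r oppr0 addr0 !expr2 evM evx0. Qed.

Lemma QuL_char q : ideal_QuL q -> exists b c, q = b * (x 1 * fQ K) + c * (x 2 * fQ K).
Proof.
move=> [/Qchar [a ->] /Lchar /Lp_ev].
rewrite evM evf => /eqP; rewrite mulf_eq0 expf_eq0 /= (negbTE x0_neq0) orbF.
move=> /eqP /ev_Lp [b [c ->]]; exists b, c; ring.
Qed.

Definition xcol : 'cV[{mpoly K[4]}]_4 := \col_j 'X_j.
Definition e3 : 'cV[{mpoly K[4]}]_6 := \col_i (if val i == 3%N then 1 else 0).
Definition u0 : 'cV[{mpoly K[4]}]_4 := \col_i (nth 0 [:: x 0; 0; 0; x 0 + x 3] i).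

Lemma Dx : Dmat (@cA K) *m xcol = (- fQ K) *: e3.
Proof.
apply/matrixP => i j; rewrite !mxE !big_ord_recr big_ord0 /= !Dnat !mxE !XE /=.
by case: i => [[|[|[|[|[|[|i]]]]]] Hi] //=; rewrite /fQ; ring.
Qed.

Lemma rowsubZ m n m' (r : 'I_m' -> 'I_m) (a : {mpoly K[4]}) (B : 'M_(m, n)) :
  rowsub r (a *: B) = a *: rowsub r B.
Proof. by apply/matrixP => i j; rewrite !mxE. Qed.

Lemma rowsub0 m n m' (r : 'I_m' -> 'I_m) :
  rowsub r (0 : 'M[{mpoly K[4]}]_(m, n)) = 0.
Proof. by apply/matrixP => i j; rewrite !mxE. Qed.

Lemma xdetQ (r : 'I_4 -> 'I_6) (j : 'I_4) :
  Qp ('X_j * \det (rowsub r (Dmat (@cA K)))).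
Proof.
set M := rowsub r _.
have h : \det M *: xcol = (- fQ K) *: (\adj M *m rowsub r e3).
  rewrite -mul_scalar_mx -mul_adj_mx -mulmxA mul_rowsub_mx Dx rowsubZ.
  by rewrite scalemxAr.
have := congr1 (fun A : 'cV[{mpoly K[4]}]_4 => A j ord0) h; rewrite !mxE mulrC => ->.
exists (- (\adj M *m rowsub r e3) j ord0); rewrite mxE !mulNr; congr (- _); exact: mulrC.
Qed.

Lemma evD_ent (i : 'I_6) (k : 'I_4) : map_mx ev (Dmat (@cA K)) i k = ev (Dn i k).
Proof. by rewrite [LHS]mxE Dnat. Qed.

Lemma Du : map_mx ev (Dmat (@cA K)) *m u0 = 0.
Proof.
apply/matrixP => i j; rewrite mxE !big_ord_recr big_ord0 /= !evD_ent !mxE /=.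
case: i => [[|[|[|[|[|[|i]]]]]] Hi] //=;
  rewrite ?(evN, evD, evx0, evx1, evx2, evx3, ev0); ring.
Qed.

Lemma detL (r : 'I_4 -> 'I_6) : Lp (\det (rowsub r (Dmat (@cA K)))).
Proof.
apply: ev_Lp; set M := rowsub r _.
have -> : ev (\det M) = \det (map_mx ev M) by rewrite /ev det_map_mx.
have E : map_mx ev M = rowsub r (map_mx ev (Dmat (@cA K))).
  by apply/matrixP => i j; rewrite !mxE.
have h : \det (map_mx ev M) *: u0 = 0.
  by rewrite -mul_scalar_mx -mul_adj_mx -mulmxA E mul_rowsub_mx Du rowsub0 mulmx0.
have := congr1 (fun A : 'cV[{mpoly K[4]}]_4 => A ord0 ord0) h; rewrite !mxE /= => /eqP.
by rewrite mulf_eq0 (negbTE x0_neq0) orbF => /eqP.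
Qed.

Definition o6 (k : nat) : 'I_6 := nth ord0 [:: @Ordinal 6 0 isT; @Ordinal 6 1 isT; @Ordinal 6 2 isT; @Ordinal 6 3 isT; @Ordinal 6 4 isT; @Ordinal 6 5 isT] k.
Definition rsel (a b c d : nat) (i : 'I_4) : 'I_6 := o6 (nth 0%N [:: a; b; c; d] i).

Lemma rsel_inj a b c d : uniq [:: a; b; c; d] -> all (fun k => k < 6)%N [:: a; b; c; d] ->
  injective (rsel a b c d).
Proof.
move=> U A.
have v : forall k, (k < 6)%N -> val (o6 k) = k.
  by move=> [|[|[|[|[|[|k]]]]]].
have w : forall i : 'I_4, val (rsel a b c d i) = nth 0%N [:: a; b; c; d] i.
  move=> i; rewrite /rsel v //; apply: (allP A); apply: mem_nth; exact: ltn_ord.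
move=> i j /(congr1 val); rewrite !w => /eqP; rewrite nth_uniq // => /eqP.
exact: val_inj.
Qed.

Lemma minorE a b c d : (a < 6)%N -> (b < 6)%N -> (c < 6)%N -> (d < 6)%N ->
  \det (rowsub (rsel a b c d) (Dmat (@cA K))) =
  let m (i j : nat) := Dn (nth 0%N [:: a; b; c; d] i) j in
  m 0 0* m 1 1* m 2 2* m 3 3 - m 0 0* m 1 1* m 2 3* m 3 2 - m 0 0* m 1 2* m 2 1* m 3 3 + m 0 0* m 1 2* m 2 3* m 3 1 + m 0 0* m 1 3* m 2 1* m 3 2 - m 0 0* m 1 3* m 2 2* m 3 1 - m 0 1* m 1 0* m 2 2* m 3 3 + m 0 1* m 1 0* m 2 3* m 3 2 + m 0 1* m 1 2* m 2 0* m 3 3 - m 0 1* m 1 2* m 2 3* m 3 0 - m 0 1* m 1 3* m 2 0* m 3 2 + m 0 1* m 1 3* m 2 2* m 3 0 + m 0 2* m 1 0* m 2 1* m 3 3 - m 0 2* m 1 0* m 2 3* m 3 1 - m 0 2* m 1 1* m 2 0* m 3 3 + m 0 2* m 1 1* m 2 3* m 3 0 + m 0 2* m 1 3* m 2 0* m 3 1 - m 0 2* m 1 3* m 2 1* m 3 0 - m 0 3* m 1 0* m 2 1* m 3 2 + m 0 3* m 1 0* m 2 2* m 3 1 + m 0 3* m 1 1* m 2 0* m 3 2 - m 0 3* m 1 1* m 2 2* m 3 0 - m 0 3* m 1 2* m 2 0* m 3 1 + m 0 3* m 1 2* m 2 1* m 3 0.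
Proof.
move=> a6 b6 c6 d6.
have v : forall k, (k < 6)%N -> val (o6 k) = k.
  by move=> [|[|[|[|[|[|k]]]]]].
apply: (@det4 _ _ (fun i j => Dn (nth 0%N [:: a; b; c; d] i) j)) => i j Hi Hj; rewrite mxE Dnat /rsel !inordK //.
by case: i Hi => [|[|[|[|i]]]] //= _; rewrite v.
Qed.

Definition Minors := point_scheme_ideal (@cA K).

Lemma minor_in a b c d (s : {mpoly K[4]}) q : uniq [:: a; b; c; d] -> all (fun k => k < 6)%N [:: a; b; c; d] ->
  (s = 1 \/ s = -1) ->
  q = s * \det (rowsub (rsel a b c d) (Dmat (@cA K))) -> Minors q.
Proof.
move=> h1 h2 _ ->; apply: genM; apply: genG.
by exists (rsel a b c d); split => //; apply: rsel_inj.
Qed.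

Lemma minors_f (j : 'I_4) : Minors ('X_j * (x 1 * fQ K)) /\ Minors ('X_j * (x 2 * fQ K)).
Proof.
rewrite XE; case: j => [[|[|[|[|j]]]] Hj] //=; split.
- by apply: (@minor_in 0 2 3 4 (-1)); [| |right|rewrite minorE //= /fQ; ring].
- by apply: (@minor_in 0 2 3 5 (-1)); [| |right|rewrite minorE //= /fQ; ring].
- by apply: (@minor_in 0 1 3 4 (-1)); [| |right|rewrite minorE //= /fQ; ring].
- by apply: (@minor_in 0 1 3 5 (-1)); [| |right|rewrite minorE //= /fQ; ring].
- by apply: (@minor_in 0 1 3 5 (-1)); [| |right|rewrite minorE //= /fQ; ring].
- by apply: (@minor_in 1 2 3 5 1); [| |left|rewrite minorE //= /fQ; ring].
- by apply: (@minor_in 0 3 4 5 1); [| |left|rewrite minorE //= /fQ; ring].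
- by apply: (@minor_in 2 3 4 5 1); [| |left|rewrite minorE //= /fQ; ring].
Qed.

Lemma msplit N (m : 'X_{1..4}) : mdeg m = N.+1 ->
  exists m1 (i : 'I_4), m = (m1 + U_(i))%MM /\ mdeg m1 = N.
Proof.
move=> Hm.
case: (pickP (fun i => m i != 0%N)) => [i Hi | H]; last first.
  move: Hm; rewrite mdegE big1 // => j _; apply/eqP; move: (H j) => /= /negbFE.
  by [].
have E : m = ((m - U_(i)) + U_(i))%MM.
  apply/mnmP => k; rewrite mnmDE mnmBE mnm1E.
  case: eqP => [<-|_]; last by rewrite subn0 addn0.
  by rewrite subnK // lt0n.
exists (m - U_(i))%MM, i; split=> //.
by move: Hm; rewrite {1}E mdegD mdeg1 addn1 => -[].
Qed.

Lemma QuL_of q : Qp q -> Lp q -> ideal_QuL q.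
Proof. by move=> /Qchar hq /Lchar hl. Qed.

Lemma MinQuL (i : 'I_4) q : Minors q -> ideal_QuL ('X_i * q).
Proof.
move=> Hq; apply: (@gen_ind _ _ (fun q => ideal_QuL ('X_i * q))) Hq.
- by rewrite mulr0; apply: QuL_of; [exists 0; rewrite mul0r | exact: Lp0].
- move=> p1 p2 [/Qchar hp1 /Lchar hp2] [/Qchar hq1 /Lchar hq2]; rewrite mulrDr.
  by apply: QuL_of; [exact: QpD | exact: LpD].
- move=> r g [f [_ ->]]; rewrite mulrCA; apply: QuL_of.
    by apply: QpM; apply: xdetQ.
  by apply: LpM; apply: LpM; apply: detL.
Qed.

Lemma QuLMin (i : 'I_4) q : ideal_QuL q -> Minors ('X_i * q).
Proof.
move=> /QuL_char [b [c ->]].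
have [h1 h2] := minors_f i.
rewrite mulrDr; apply: genD; rewrite mulrCA; apply: genM; first [exact: h1 | exact: h2].
Qed.

End S.

Theorem proposition5 (K : closedFieldType) (hK : (2 \notin [pchar K])%N) :
  (* point scheme of A equals Q u L as subschemes of P^3 *)
  (forall p : {mpoly K[4]},
     saturation (point_scheme_ideal (@cA K)) p <-> saturation (@ideal_QuL K) p)
  /\
  (* e4 = (0:0:0:1) lies on L and is a singular point of Q *)
  ((xv K 1).@[ptL 0 1] = 0 /\ (xv K 2).@[ptL 0 1] = 0 /\
   (fQ K).@[ptL 0 1] = 0 /\
   (forall i : 'I_4, (mderiv i (fQ K)).@[ptL 0 1] = 0))
  /\
  (* L is tangent to Q there: Q restricted to L is s^2 (double point at e4) *)
  (forall s t : K, (fQ K).@[ptL s t] = s ^+ 2).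
Proof.
have P0 : forall s t : K, (xv K 0).@[ptL s t] = s.
  by move=> s t; rewrite /xv mevalXU /ptL inordK.
have P1 : forall s t : K, (xv K 1).@[ptL s t] = 0.
  by move=> s t; rewrite /xv mevalXU /ptL inordK.
have P2 : forall s t : K, (xv K 2).@[ptL s t] = 0.
  by move=> s t; rewrite /xv mevalXU /ptL inordK.
have F : forall s t : K, (fQ K).@[ptL s t] = s ^+ 2.
  by move=> s t; rewrite /fQ expr2 rmorphB !rmorphM /= P0 P1 P2 mul0r subr0 expr2.
split; last split; last exact: F.
  move=> p; split.
    move=> [N HN]; exists N.+1 => m Hm.
    have [m1 [i [-> Hm1]]] := @msplit _ _ Hm.
    rewrite mpolyXD -mulrA mulrCA; apply: MinQuL; exact: HN.
  move=> [N HN]; exists N.+1 => m Hm.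
  have [m1 [i [-> Hm1]]] := @msplit _ _ Hm.
  rewrite mpolyXD -mulrA mulrCA; apply: QuLMin; exact: HN.
split; first exact: P1.
split; first exact: P2.
split; first by rewrite F expr2 mulr0.
move=> i; rewrite /fQ expr2 mderivB !mderivM rmorphB !rmorphD !rmorphM /=.
by rewrite P0 P1 P2 !mulr0 !mul0r !addr0 subr0.
Qed.
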